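(* Let $\mathbf b,\mathbf b'\in\mathrm{Seq}(B,d)$. Then $\mathbf b^*:=b_1^*\cdots b_d^*\in\mathrm{Seq}(B^*,d)$, and $(y_{\mathbf b'},y_{\mathbf b^*})_d=\pm\, d!\,\delta_{\mathbf b\sim\mathbf b'}$, where $\delta_{\mathbf b\sim\mathbf b'}$ is $1$ if $\mathbf b\sim\mathbf b'$ and $0$ otherwise.
   Context: Let $R$ be a principal ideal domain of characteristic $0$. Supermodules are $\mathbb Z/2$-graded, $|v|$ is the parity of a homogeneous $v$. A calibrated $R$-supermodule is a free $R$-supermodule $V=V_{\bar0}\oplus V_{\bar1}$ of finite rank with a decomposition $V_{\bar0}=V_{\mathfrak a}\oplus V_{\mathfrak c}$ into free $R$-submodules; given bases $B_{\mathfrak a},B_{\mathfrak c},B_{\bar1}$ of these three pieces and a total order on $B=B_{\mathfrak a}\sqcup B_{\mathfrak c}\sqcup B_{\bar1}$, define: $\mathfrak S_d$ acts on $V^{\otimes d}$ on the right by $(v_1\otimes\cdots\otimes v_d)^\sigma=(-1)^{\langle\sigma;\mathbf v\rangle}v_{\sigma1}\otimes\cdots\otimes v_{\sigma d}$, $\langle\sigma;\mathbf v\rangle$ = number of $k<l$ with $\sigma^{-1}k>\sigma^{-1}l$ and $v_k,v_l$ odd; $\mathfrak S_d$ acts on $B^d$ by place permutations and $\sim$ means same orbit; for $\mathbf b\in B^d$, $\langle\mathbf b\rangle$ = number of $k<l$ with $b_k,b_l\in B_{\bar1}$, $b_k>b_l$; $[\mathbf b]^!_{\mathfrak c}=\prod_{b\in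 B_{\mathfrak c}}\#\{k:b_k=b\}!$; $\mathrm{Seq}(B,d)$ = tuples in $B^d$ in which only elements of $B_{\mathfrak a}\sqcup B_{\mathfrak c}$ may repeat; $x_{\mathbf b}=\sum(-1)^{\langle\mathbf b\rangle+\langle\mathbf b'\rangle}b'_1\otimes\cdots\otimes b'_d$ over distinct $\mathbf b'\sim\mathbf b$, and $y_{\mathbf b}=[\mathbf b]^!_{\mathfrak c}x_{\mathbf b}$. Setting: $V$ is a calibrated $R$-supermodule equipped with an even, non-degenerate, $R$-valued bilinear form $(\cdot,\cdot)$ which is supersymmetric or superantisymmetric, such that $(V_{\mathfrak a},V_{\mathfrak a})=0$ and the restriction of $(\cdot,\cdot)$ to $V_{\mathfrak a}\times V_{\mathfrak c}$ is a perfect pairing. Choose bases $B_{\mathfrak a}=\{a_1,\dots,a_r\}$, $B_{\mathfrak c}=\{c_1,\dots,c_r\}$ with $(a_i,c_j)=\delta_{i,j}$, a basis $B_{\bar1}$ of $V_{\bar1}$, and $B=B_{\mathfrak a}\sqcup B_{\mathfrak c}\sqcup B_{\bar1}$. Let $B^*=\{b^*:b\in B\}$ be the dual basis, $(b',b^* )=\delta_{b,b'}$ for $b,b'\in B$. Then $c_i^*=\pm a_i$, and $V$ is also calibrated with the same $V_{\mathfrak a}$ and complement $V'_{\mathfrak c}=\mathrm{span}_R\{a_1^*,\dots,a_r^*\}$, with basis $B^*$ split as $B^*_{\mathfrak a}=\{c_i^*\}$, $B^*_{\mathfrak c}=\{a_i^*\}$, $B^*_{\bar1}=\{b^*:b\in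 B_{\bar1}\}$ (and some fixed total order on $B^*$); $\mathrm{Seq}(B^*,d)$ and $y_{\mathbf b^*}$ are formed with respect to this data. The form extends to $V^{\otimes d}$ by $(v_1\otimes\cdots\otimes v_d,w_1\otimes\cdots\otimes w_d)_d=(-1)^{\langle\mathbf v,\mathbf w\rangle}(v_1,w_1)\cdots(v_d,w_d)$, where $\langle\mathbf v,\mathbf w\rangle$ is the number of pairs $k>l$ with $v_k$ and $w_l$ odd. *)

(* Defs.v *)
From HB Require Import structures.
From mathcomp Require Import all_boot all_order all_algebra.
Set Implicit Arguments.
Unset Strict Implicit.
Unset Printing Implicit Defensive.
Import GRing.Theory.
Local Open Scope ring_scope.

(* Kind of a basis vector of a calibrated supermodule:
   KA = in B_a, KC = in B_c (both even), KO = in B_odd. *)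
Inductive kind := KA | KC | KO.
Definition oddk (k : kind) : bool := if k is KO then true else false.
Definition isKC (k : kind) : bool := if k is KC then true else false.

Definition is_PID (R : comNzRingType) : Prop :=
  forall I : R -> Prop, I 0 ->
    (forall x y, I x -> I y -> I (x - y)) ->
    (forall a x, I x -> I (a * x)) ->
    exists g : R, forall x, I x <-> exists k, x = k * g.

Section Super.
Variables (R : comNzRingType) (B : finType).

(* V is modelled as coordinate functions B -> R on its (homogeneous) basis B;
   V^{(x)d} as coordinate functions d.-tuple B -> R on the basis B^d. *)

(* <t> : number of k<l with t_k,t_l odd and t_k > t_l for the order rk
   (a total order on B given by an injective rank function rk). *)
Definition invs (kd : B -> kind) (rk : B -> nat) d (t : d.-tuple B) : nat :=
  #|[set kl : 'I_d * 'I_d | [&& (kl.1 < kl.2)%N, oddk (kd (tnth t kl.1)),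
      oddk (kd (tnth t kl.2)) & (rk (tnth t kl.2) < rk (tnth t kl.1))%N]]|.

(* x_b = sum over distinct b' ~ b of (-1)^(<b>+<b'>) e(b'_1) (x) ... (x) e(b'_d),
   where e : B -> V maps an index to the corresponding basis vector. *)
Definition xvec (kd : B -> kind) (rk : B -> nat) (e : B -> B -> R) d
    (b : d.-tuple B) : d.-tuple B -> R :=
  fun u => \sum_(t : d.-tuple B | perm_eq t b)
     (-1) ^+ (invs kd rk b + invs kd rk t) * \prod_(k < d) e (tnth t k) (tnth u k).

Definition cfact (kd : B -> kind) d (b : d.-tuple B) : nat :=
  \prod_(x : B | isKC (kd x)) (count_mem x b)`!.

Definition yvec (kd : B -> kind) (rk : B -> nat) (e : B -> B -> R) d
    (b : d.-tuple B) : d.-tuple B -> R :=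
  fun u => (cfact kd b)%:R * xvec kd rk e b u.

Definition seqB (kd : B -> kind) d (b : d.-tuple B) : bool :=
  [forall x : B, oddk (kd x) ==> (count_mem x b <= 1)%N].

Definition form1 (G : B -> B -> R) (v w : B -> R) : R :=
  \sum_(x : B) \sum_(y : B) v x * G x y * w y.

Definition npair (kd : B -> kind) d (s t : d.-tuple B) : nat :=
  #|[set kl : 'I_d * 'I_d | [&& (kl.2 < kl.1)%N, oddk (kd (tnth s kl.1))
      & oddk (kd (tnth t kl.2))]]|.

Definition formd (G : B -> B -> R) (kd : B -> kind) d (X Y : d.-tuple B -> R) : R :=
  \sum_(s : d.-tuple B) \sum_(t : d.-tuple B)
     X s * Y t * ((-1) ^+ npair kd s t * \prod_(k < d) G (tnth s k) (tnth t k)).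

Definition delta (x : B) : B -> R := fun y => (x == y)%:R.

End Super.

(* Concrete basis B = {a_1..a_r} + {c_1..c_r} + B_odd *)
Definition Bt (r : nat) (O : finType) : finType := (('I_r + 'I_r) + O)%type.

Definition kindB r O (x : Bt r O) : kind :=
  match x with inl (inl _) => KA | inl (inr _) => KC | inr _ => KO end.

(* calibration of B^*: B^*_a = {c_i^*}, B^*_c = {a_i^*}, B^*_odd = {b^* : b odd};
   the star of index x has kind kindStar x *)
Definition kindStar r O (x : Bt r O) : kind :=
  match x with inl (inl _) => KC | inl (inr _) => KA | inr _ => KO end.

Definition avec r O (i : 'I_r) : Bt r O := inl (inl i).
Definition cvec r O (i : 'I_r) : Bt r O := inl (inr i).

(* Main.v *)
Require Import Defs.
From HB Require Import structures.
From mathcomp Require Import all_boot all_order all_algebra.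
From mathcomp Require Import all_fingroup.
From mathcomp Require Import ring.
Set Implicit Arguments. Unset Strict Implicit. Unset Printing Implicit Defensive.
Import GRing.Theory.
Lemma sum_count_mem (T : finType) (s : seq T) :
  \sum_(x : T) count_mem x s = size s.
Proof.
elim: s => [|y s IH] /=; first by rewrite big1.
rewrite big_split /= IH (bigD1 y) //= eqxx big1 ?addn0 ?add1n // => x /negbTE.
by rewrite eq_sym => ->.
Qed.

Lemma perms_count (T : finType) (s : seq T) :
  size (permutations s) * \prod_(x : T) (count_mem x s)`! = (size s)`!.
Proof.
move Dn: (size s) => n; elim: n s Dn => [|n IH] s Dn.
  by move/size0nil: Dn => ->; rewrite big1.
rewrite (perm_size (permutationsE _)) ?Dn // size_allpairs_dep sumnE big_map.
rewrite big_distrl /=.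
have -> : \sum_(x <- undup s) size (permutations (rem x s)) *
     \prod_(y : T) (count_mem y s)`! = \sum_(x <- undup s) n`! * count_mem x s.
  rewrite !big_seq; apply: eq_bigr => x; rewrite mem_undup => xs.
  have Ec : forall y, count_mem y s = (x == y) + count_mem y (rem x s).
    by move=> y; rewrite (seq.permP (perm_to_rem xs)) /=.
  idtac.
  have IHx := IH (rem x s); rewrite size_rem // Dn /= in IHx.
  rewrite -{1}(IHx (erefl n)).
  rewrite (bigD1 x) ?mem_index_enum //= [X in _ = _ * X * _](bigD1 x) //= Ec eqxx add1n factS.
  rewrite (eq_bigr (fun y => (count_mem y (rem x s))`!)); last first.
    by move=> y /andP[_ /negbTE]; rewrite Ec eq_sym => ->.
  rewrite (eq_bigl (fun i => i != x)) //; last by move=> i; rewrite mem_index_enum.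
  by rewrite -!mulnA; congr (_ * _); rewrite mulnCA (mulnC _.+1).
rewrite -(big_distrr (n`!)) /= big_uniq ?undup_uniq //.
rewrite (eq_bigl (fun x => x \in s)); last by move=> x; rewrite mem_undup.
rewrite big_mkcond /= (eq_bigr (fun x => count_mem x s)); last first.
  by move=> x _; case: ifP => // /negbT xs; apply/esym/count_memPn.
by rewrite sum_count_mem Dn factS mulnC.
Qed.

Lemma card_perm_tuples (T : finType) d (b : d.-tuple T) :
  #|[pred t : d.-tuple T | perm_eq t b]| = size (permutations b).
Proof.
rewrite cardE -(size_map val); apply: perm_size; apply: uniq_perm.
- by rewrite (map_inj_uniq val_inj) enum_uniq.
- exact: permutations_uniq.
move=> s; rewrite mem_permutations; apply/mapP/idP => [[t]|Ps].
  by rewrite mem_enum inE => Pt ->.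
have Hs : size s == d by rewrite (perm_size Ps) size_tuple.
by exists (Tuple Hs); rewrite // mem_enum inE.
Qed.
Section Counts.
Variables (T : finType) (d : nat).

Definition Ncnt (f : T -> T -> bool) (s : d.-tuple T) : nat :=
  \sum_(kl : 'I_d * 'I_d) ((kl.1 < kl.2)%N && f (tnth s kl.1) (tnth s kl.2)).
Definition Mcnt (f : T -> T -> bool) (s : d.-tuple T) : nat :=
  \sum_(kl : 'I_d * 'I_d) ((kl.1 != kl.2) && f (tnth s kl.1) (tnth s kl.2)).

Definition swp (kl : 'I_d * 'I_d) := (kl.2, kl.1).
Lemma swp_inj : injective swp.
Proof. by apply: (can_inj (g := swp)) => -[]. Qed.

Lemma Mcnt_Ncnt f s : (forall x y, f x y = f y x) -> Mcnt f s = (Ncnt f s * 2)%N.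
Proof.
move=> fsym; rewrite /Mcnt /Ncnt muln2 -addnn.
rewrite [X in _ = (_ + X)%N](reindex_inj swp_inj) /=.
rewrite -big_split /=; apply: eq_bigr => -[k l] _ /=.
rewrite neq_ltn fsym; case: (ltngtP k l) => //= _; first by rewrite addn0.
Qed.

Lemma Mcnt_perm f (s t : d.-tuple T) : perm_eq s t -> Mcnt f s = Mcnt f t.
Proof.
case/tuple_permP => p Es.
have -> : s = [tuple tnth t (p i) | i < d] by apply: val_inj.
rewrite /Mcnt [in RHS](reindex_inj (h := fun kl => (p kl.1, p kl.2))); last first.
  by move=> [a b] [c e] /= [/perm_inj -> /perm_inj ->].
apply: eq_bigr => -[k l] _ /=; rewrite !tnth_mktuple (inj_eq perm_inj) //.
Qed.

Lemma Ncnt_perm f (s t : d.-tuple T) : (forall x y, f x y = f y x) -> perm_eq s t ->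
  Ncnt f s = Ncnt f t.
Proof.
move=> fsym /(Mcnt_perm f); rewrite !Mcnt_Ncnt // => /eqP.
by rewrite eqn_mul2r /= => /eqP.
Qed.

End Counts.

Lemma card_set_sum (I : finType) (P : pred I) : #|[set x | P x]| = \sum_x (P x : nat).
Proof.
rewrite -sum1_card big_mkcond /=; apply: eq_bigr => x _.
by rewrite inE; case: (P x).
Qed.

Local Open Scope ring_scope.

Lemma sign_sum (R : pzRingType) (I : Type) (r : seq I) (P : pred I) (F : I -> nat) :
  (-1) ^+ (\sum_(i <- r | P i) F i) = \prod_(i <- r | P i) (-1) ^+ (F i) :> R.
Proof. by apply: (big_morph (fun n => (-1) ^+ n)); [move=> m n; rewrite exprD | rewrite expr0]. Qed.

Lemma sign_bool (R : pzRingType) (a o1 o2 p q : bool) :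
  (-1) ^+ ([&& a, o1, o2 & p] + [&& a, o1, o2 & q] + [&& a, o2 & o1])%N
  = (-1) ^+ [&& a, o1, o2 & (p == q)] :> R.
Proof.
by case: a o1 o2 p q => [] [] [] [] [] /=; rewrite ?(expr0, expr1, exprS, mulN1r, opprK, mulr1).
Qed.

Section Signs.
Variables (T : finType) (kd ks : T -> kind) (rB rS : T -> nat).
Hypotheses (hks : forall x, oddk (ks x) = oddk (kd x)) (injB : injective rB) (injS : injective rS).

Definition fsg (x y : T) : bool :=
  [&& oddk (kd x), oddk (kd y) & ((rB y < rB x)%N == (rS y < rS x)%N)].

Lemma fsg_sym x y : fsg x y = fsg y x.
Proof.
rewrite /fsg; case: (oddk (kd x)); case: (oddk (kd y)) => //=.
case: (eqVneq x y) => [->//|nxy].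
have hB : rB x != rB y by rewrite (inj_eq injB).
have hS : rS x != rS y by rewrite (inj_eq injS).
by case: (ltngtP (rB x) (rB y)) hB => // _ _; case: (ltngtP (rS x) (rS y)) hS.
Qed.

Lemma sign_invs (R : pzRingType) d (s : d.-tuple T) :
  (-1) ^+ (invs kd rB s + invs ks rS s + npair kd s s)%N
  = (-1) ^+ (Ncnt fsg s) :> R.
Proof.
rewrite /invs /npair !card_set_sum.
rewrite [X in (_ + X)%N](reindex_inj (@swp_inj d)) /=.
rewrite -!big_split /= !sign_sum; apply: eq_bigr => -[k l] _ /=.
by rewrite !hks sign_bool.
Qed.

End Signs.
Lemma prod_eqR (R : comNzRingType) (T : eqType) d (t s : d.-tuple T) :
  \prod_(k < d) ((tnth t k == tnth s k)%:R : R) = (t == s)%:R.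
Proof.
have [->|nts] := eqVneq t s; first by rewrite big1 // => k _; rewrite eqxx.
have [k hk] : exists k, tnth t k != tnth s k.
  apply/existsP; apply: contraR nts => /existsPn H; apply/eqP/eq_from_tnth => k.
  by apply/eqP; move: (H k); rewrite negbK.
by rewrite (bigD1 k) //= (negbTE hk) mul0r.
Qed.

Lemma sum_pick (R : comNzRingType) (T : finType) (P : pred T) (f : T -> R) s :
  \sum_(t | P t) f t * (t == s)%:R = (P s)%:R * f s.
Proof.
case Ps: (P s).
  rewrite (bigD1 s) //= eqxx mulr1 big1 ?addr0 ?mul1r // => t /andP[_ /negbTE ->].
  by rewrite mulr0.
rewrite big1 ?mul0r // => t Pt; have [E|_] := eqVneq t s; last by rewrite mulr0.
by rewrite E Ps in Pt.
Qed.

Lemma tuple_sum_prod (R : comNzRingType) (T : finType) d (F : 'I_d -> T -> R) :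
  \sum_(u : d.-tuple T) \prod_(k < d) F k (tnth u k) = \prod_(k < d) \sum_(y : T) F k y.
Proof.
rewrite bigA_distr_bigA /=.
rewrite (reindex (fun u : d.-tuple T => [ffun k => tnth u k])) /=; last first.
  apply: onW_bij; exists (fun f : {ffun 'I_d -> T} => [tuple f k | k < d]).
    by move=> u; apply: eq_from_tnth => k; rewrite tnth_mktuple ffunE.
  by move=> f; apply/ffunP => k; rewrite ffunE tnth_mktuple.
by apply: eq_bigr => u _; apply: eq_bigr => k _; rewrite ffunE.
Qed.

Lemma form1_delta (R : comNzRingType) (B : finType) (G : B -> B -> R) x w :
  form1 G (delta R x) w = \sum_y G x y * w y.
Proof.
rewrite /form1 (bigD1 x) //= [X in _ + X]big1 ?addr0.
  by apply: eq_bigr => y _; rewrite /delta eqxx mul1r.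
by move=> x' /negbTE nx; apply: big1 => y _; rewrite /delta eq_sym nx !mul0r.
Qed.

Lemma cfact_split (r : nat) (O : finType) d (b : d.-tuple (Bt r O)) :
  seqB (@kindB r O) b ->
  (cfact (@kindB r O) b * cfact (@kindStar r O) b)%N = \prod_(x : Bt r O) (count_mem x b)`!.
Proof.
move=> hb; rewrite /cfact !(big_mkcond (fun x => isKC _)) -big_split /=.
apply: eq_bigr => x _; case: x => [[i|i]|o] //=; rewrite ?muln1 ?mul1n //.
move/forallP: hb => /(_ (inr o)) /=.
by case: (count_mem _ _) => [|[|]].
Qed.

Unset Implicit Arguments.
Set Strict Implicit.

Theorem lemma3p9 (R : idomainType)
  (hchar : forall n : nat, (n.+1)%:R != 0 :> R) (hpid : is_PID R)
  (r : nat) (O : finType)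
  (G : Bt r O -> Bt r O -> R)
  (Geven : forall x y, oddk (kindB x) != oddk (kindB y) -> G x y = 0)
  (Gsym : exists eps : R, (eps = 1 \/ eps = -1) /\
     forall x y, G x y = eps * (-1) ^+ (oddk (kindB x) && oddk (kindB y)) * G y x)
  (Gnondeg : forall v : Bt r O -> R,
     (forall w : Bt r O -> R, form1 G v w = 0) -> forall x, v x = 0)
  (Gaa : forall i j : 'I_r, G (avec O i) (avec O j) = 0)
  (Gac : forall i j : 'I_r, G (avec O i) (cvec O j) = (i == j)%:R)
  (bstar : Bt r O -> Bt r O -> R)
  (hdual : forall b b' : Bt r O, form1 G (delta R b') (bstar b) = (b == b')%:R)
  (ordB ordS : Bt r O -> nat) (injB : injective ordB) (injS : injective ordS)
  (d : nat) (b b' : d.-tuple (Bt r O))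
  (hb : seqB (@kindB r O) b) (hb' : seqB (@kindB r O) b') :
  seqB (@kindStar r O) b /\
  exists s : R, (s = 1 \/ s = -1) /\
    formd G (@kindB r O) (yvec (@kindB r O) ordB (@delta R _) b')
                         (yvec (@kindStar r O) ordS bstar b)
    = s * (d`!)%:R * (perm_eq b b')%:R.
Proof.
split.
  apply/forallP => x; move/forallP: hb => /(_ x).
  by case: x => [[]|].
set kd := @kindB r O; set ks := @kindStar r O.
have hks : forall x, oddk (ks x) = oddk (kd x) by case=> [[]|].
have XE : forall s : d.-tuple (Bt r O), yvec kd ordB (@delta R _) b' s = (cfact kd b')%:R *
    ((perm_eq s b')%:R * (-1) ^+ (invs kd ordB b' + invs kd ordB s)).
  move=> s; rewrite /yvec /xvec; congr (_ * _).
  rewrite (eq_bigr (fun t => (-1) ^+ (invs kd ordB b' + invs kd ordB t) * (t == s)%:R)).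
    by rewrite sum_pick mulrC.
  by move=> t _; rewrite -prod_eqR.
have YE : forall s : d.-tuple (Bt r O), \sum_(u : d.-tuple (Bt r O)) yvec ks ordS bstar b u *
     ((-1) ^+ npair kd s u * \prod_(k < d) G (tnth s k) (tnth u k)) =
   (-1) ^+ npair kd s s * ((cfact ks b)%:R *
     ((perm_eq s b)%:R * (-1) ^+ (invs ks ordS b + invs ks ordS s))).
  move=> s.
  have np : forall u, (-1) ^+ npair kd s u * \prod_(k < d) G (tnth s k) (tnth u k)
      = (-1) ^+ npair kd s s * \prod_(k < d) G (tnth s k) (tnth u k).
    move=> u; have [->|nz] := eqVneq (\prod_(k < d) G (tnth s k) (tnth u k)) 0.
      by rewrite !mulr0.
    congr (_ * _); congr (_ ^+ _); rewrite /npair; apply: eq_card => kl; rewrite !inE.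
    have Gne : G (tnth s kl.2) (tnth u kl.2) != 0 by move/prodf_neq0: nz; apply.
    case E: (oddk (kd (tnth s kl.2)) == oddk (kd (tnth u kl.2))); first by rewrite (eqP E).
    by move/negbT: E => /Geven E; rewrite E eqxx in Gne.
  under eq_bigr do rewrite np mulrCA.
  rewrite -mulr_sumr; congr (_ * _).
  rewrite /yvec /xvec.
  under eq_bigr do rewrite -mulrA mulr_suml.
  rewrite -mulr_sumr; congr (_ * _).
  rewrite exchange_big /=.
  under eq_bigr do under eq_bigr do rewrite -mulrA.
  under eq_bigr do rewrite -mulr_sumr.
  rewrite (eq_bigr (fun t => (-1) ^+ (invs ks ordS b + invs ks ordS t) * (t == s)%:R)).
    by rewrite sum_pick.
  move=> t _; congr (_ * _).
  under eq_bigr do rewrite -big_split /=.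
  rewrite (tuple_sum_prod (fun k y => bstar (tnth t k) y * G (tnth s k) y)) -prod_eqR.
  apply: eq_bigr => k _.
  by rewrite -hdual form1_delta; apply: eq_bigr => y _; rewrite mulrC.
rewrite /formd.
under eq_bigr do under eq_bigr do rewrite -mulrA.
under eq_bigr do rewrite -mulr_sumr YE XE.
case pbb: (perm_eq b b'); last first.
  exists 1; split; first by left.
  rewrite mulr0; apply: big1 => s _.
  case Ps': (perm_eq s b'); last by rewrite mul0r mulr0 mul0r.
  case Ps: (perm_eq s b); last by rewrite !(mul0r, mulr0).
  by rewrite -(permPl Ps) Ps' in pbb.
pose sign0 : R := (-1) ^+ (invs kd ordB b' + invs ks ordS b + Ncnt (fsg kd ordB ordS) b).
exists sign0; split.
  by rewrite /sign0 -signr_odd; case: odd; [right|left].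
have cf : cfact kd b' = cfact kd b.
  by rewrite /cfact; apply: eq_bigr => x _; rewrite (seq.permP pbb).
rewrite (eq_bigr (fun s : d.-tuple (Bt r O) => if perm_eq s b then (cfact kd b * cfact ks b)%:R * sign0 else 0)).
  rewrite -big_mkcond /= sumr_const.
  have cnt : (cfact kd b * cfact ks b * #|[pred t : d.-tuple (Bt r O) | perm_eq t b]|)%N = d`!.
    by rewrite cfact_split // card_perm_tuples mulnC perms_count size_tuple.
  rewrite -mulr_natr -cnt (natrM _ _ #|_|) /=. ring.
move=> s _; case Psb: (perm_eq s b); last by rewrite mul0r !mulr0.
have Psb' : perm_eq s b' by rewrite (permPl Psb).
rewrite Psb' cf.
have Sg := sign_invs ordB ordS hks R s.
rewrite (Ncnt_perm (fsg_sym kd injB injS) Psb) in Sg.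
rewrite /sign0 !exprD -Sg !exprD natrM.
move: ((-1) ^+ invs kd ordB b') ((-1) ^+ invs kd ordB s) ((-1) ^+ invs ks ordS b) ((-1) ^+ invs ks ordS s) ((-1) ^+ npair kd s s) ((cfact kd b)%:R) ((cfact ks b)%:R) => x1 x2 x3 x4 x5 x6 x7 /=.
ring.
Qed.
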